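(* Consider the grid and the operator $Q_{i,j}$ described in the context, fix a species index $l$ with valence $q^l\in\mathbb{R}$, a time step $\Delta t^{n+1}>0$, and a real grid function $\psi^{n+1}=(\psi^{n+1}_{i,j})$, and set $S^{l,n+1}_{i,j}=q^l\psi^{n+1}_{i,j}$. Suppose $c^{l,n}_{i,j}>0$ for all $1\le i\le N_x$, $1\le j\le N_y$, and that $c^{l,n+1}$ satisfies the backward Euler scheme $$h^x_ih^y_j\,\frac{c^{l,n+1}_{i,j}-c^{l,n}_{i,j}}{\Delta t^{n+1}}=Q_{i,j}(c^{l,n+1},S^{l,n+1})\qquad(1\le i\le N_x,\ 1\le j\le N_y).$$ Then $c^{l,n+1}_{i,j}>0$ for all $1\le i\le N_x$, $1\le j\le N_y$.
   Context: Grid on $\Omega=[a,b]\times[c,d]$: $a=x_{1/2}<x_{3/2}<\dots<x_{N_x+1/2}=b$, $c=y_{1/2}<\dots<y_{N_y+1/2}=d$; $x_i=(x_{i-1/2}+x_{i+1/2})/2$, $y_j=(y_{j-1/2}+y_{j+1/2})/2$; $h^x_i=x_{i+1/2}-x_{i-1/2}$, $h^y_j=y_{j+1/2}-y_{j-1/2}$; $h^x_{i+1/2}=x_{i+1}-x_i$ ($1\le i\le N_x-1$), $h^y_{j+1/2}=y_{j+1}-y_j$ ($1\le j\le N_y-1$). For grid functions $c,S$ define fluxes $\widehat g_{x,i+1/2,j}=\frac{c_{i+1,j}e^{S_{i+1,j}}-c_{i,j}e^{S_{i,j}}}{h^x_{i+1/2}}$ ($1\le i\le N_x-1$), $\widehat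 g_{y,i,j+1/2}=\frac{c_{i,j+1}e^{S_{i,j+1}}-c_{i,j}e^{S_{i,j}}}{h^y_{j+1/2}}$ ($1\le j\le N_y-1$), with zero-flux boundary values $\widehat g_{x,1/2,j}=\widehat g_{x,N_x+1/2,j}=\widehat g_{y,i,1/2}=\widehat g_{y,i,N_y+1/2}=0$; harmonic means $e^{-S_{i+1/2,j}}:=\frac{2e^{-S_{i+1,j}}e^{-S_{i,j}}}{e^{-S_{i+1,j}}+e^{-S_{i,j}}}$, $e^{-S_{i,j+1/2}}:=\frac{2e^{-S_{i,j+1}}e^{-S_{i,j}}}{e^{-S_{i,j+1}}+e^{-S_{i,j}}}$ (irrelevant at boundary half-indices, where fluxes vanish); and $$Q_{i,j}(c,S)=h^y_j\big(e^{-S_{i+1/2,j}}\widehat g_{x,i+1/2,j}-e^{-S_{i-1/2,j}}\widehat g_{x,i-1/2,j}\big)+h^x_i\big(e^{-S_{i,j+1/2}}\widehat g_{y,i,j+1/2}-e^{-S_{i,j-1/2}}\widehat g_{y,i,j-1/2}\big).$$ This is a discretization of the Nernst--Planck equation $\partial_tc^l=\nabla\cdot(e^{-q^l\psi}\nabla(c^le^{q^l\psi}))$ with zero-flux boundary conditions; in the full method $\psi^{n+1}$ is coupled to the concentrations through a discretized Poisson equation, here it is an arbitrary given grid function. *)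

(* Defs.v *)
From Stdlib Require Import Reals.
Open Scope R_scope.

(* Grid conventions (1-based cells, as in the paper):
   xf k = x_{k+1/2} for 0 <= k <= Nx  (so xf 0 = a, xf Nx = b),
   yf k = y_{k+1/2} for 0 <= k <= Ny.
   Grid functions are maps nat -> nat -> R, only used at 1<=i<=Nx, 1<=j<=Ny. *)

Definition strictly_increasing_on (f : nat -> R) (N : nat) : Prop :=
  forall k, (k < N)%nat -> f k < f (S k).

Definition center (f : nat -> R) (i : nat) : R := (f (i - 1)%nat + f i) / 2.
Definition hcell (f : nat -> R) (i : nat) : R := f i - f (i - 1)%nat.
(* dual width h_{i+1/2} = x_{i+1} - x_i *)
Definition hdual (f : nat -> R) (i : nat) : R := center f (S i) - center f i.

Definition hmean (s1 s2 : R) : R :=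
  2 * exp (- s1) * exp (- s2) / (exp (- s1) + exp (- s2)).

Definition gx (xf : nat -> R) (Nx : nat) (c s : nat -> nat -> R) (k j : nat) : R :=
  if ((1 <=? k) && (k <=? Nx - 1))%bool then
    (c (S k) j * exp (s (S k) j) - c k j * exp (s k j)) / hdual xf k
  else 0.

Definition gy (yf : nat -> R) (Ny : nat) (c s : nat -> nat -> R) (i k : nat) : R :=
  if ((1 <=? k) && (k <=? Ny - 1))%bool then
    (c i (S k) * exp (s i (S k)) - c i k * exp (s i k)) / hdual yf k
  else 0.

(* e^{-S_{k+1/2,j}} * ghat_{x,k+1/2,j}  (harmonic mean irrelevant where flux = 0) *)
Definition Fx xf Nx (c s : nat -> nat -> R) (k j : nat) : R :=
  hmean (s (S k) j) (s k j) * gx xf Nx c s k j.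
Definition Fy yf Ny (c s : nat -> nat -> R) (i k : nat) : R :=
  hmean (s i (S k)) (s i k) * gy yf Ny c s i k.

Definition Q (xf yf : nat -> R) (Nx Ny : nat) (c s : nat -> nat -> R) (i j : nat) : R :=
  hcell yf j * (Fx xf Nx c s i j - Fx xf Nx c s (i - 1)%nat j)
  + hcell xf i * (Fy yf Ny c s i j - Fy yf Ny c s i (j - 1)%nat).

(* Main.v *)
Require Import Defs.
From Stdlib Require Import Reals Lra Lia.
Open Scope R_scope.

Lemma hdual_pos xf N k : strictly_increasing_on xf N -> (1 <= k)%nat -> (k <= N - 1)%nat ->
  0 < hdual xf k.
Proof.
  intros H h1 h2. unfold hdual, center.
  replace (S k - 1)%nat with k by lia.
  assert (A : xf (k-1)%nat < xf k).
  { replace k with (S (k-1)) at 2 by lia. apply H; lia. }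
  assert (B : xf k < xf (S k)) by (apply H; lia).
  lra.
Qed.

Lemma hcell_pos xf N k : strictly_increasing_on xf N -> (1 <= k <= N)%nat -> 0 < hcell xf k.
Proof.
  intros H h. unfold hcell.
  assert (A : xf (k-1)%nat < xf k).
  { replace k with (S (k-1)) at 2 by lia. apply H; lia. }
  lra.
Qed.

Lemma hmean_pos a b : 0 < hmean a b.
Proof.
  unfold hmean. pose proof (exp_pos (-a)). pose proof (exp_pos (-b)).
  unfold Rdiv. apply Rmult_lt_0_compat.
  - apply Rmult_lt_0_compat; [lra|]. assumption.
  - apply Rinv_0_lt_compat. lra.
Qed.

Lemma Fx_right xf Nx c s i j : strictly_increasing_on xf Nx ->
  (forall k, (1 <= k <= Nx)%nat -> c i j * exp (s i j) <= c k j * exp (s k j)) ->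
  0 <= Fx xf Nx c s i j.
Proof.
  intros H Hm. unfold Fx, gx.
  destruct ((1 <=? i) && (i <=? Nx - 1))%bool eqn:E.
  - apply andb_prop in E as [E1 E2]. apply Nat.leb_le in E1, E2.
    apply Rmult_le_pos; [left; apply hmean_pos|].
    unfold Rdiv. apply Rmult_le_pos.
    + assert (c i j * exp (s i j) <= c (S i) j * exp (s (S i) j)) by (apply Hm; lia). lra.
    + left. apply Rinv_0_lt_compat. apply (hdual_pos xf Nx); auto.
  - lra.
Qed.

Lemma Fx_left xf Nx c s i j : strictly_increasing_on xf Nx ->
  (forall k, (1 <= k <= Nx)%nat -> c i j * exp (s i j) <= c k j * exp (s k j)) ->
  Fx xf Nx c s (i - 1)%nat j <= 0.
Proof.
  intros H Hm. unfold Fx, gx.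
  destruct ((1 <=? i - 1) && (i - 1 <=? Nx - 1))%bool eqn:E.
  - apply andb_prop in E as [E1 E2]. apply Nat.leb_le in E1, E2.
    replace (S (i-1)) with i by lia.
    assert (c i j * exp (s i j) <= c (i-1)%nat j * exp (s (i-1)%nat j)) by (apply Hm; lia).
    pose proof (hmean_pos (s i j) (s (i-1)%nat j)).
    assert (0 < hdual xf (i-1)) by (apply (hdual_pos xf Nx); auto).
    assert (0 <= (c (i-1)%nat j * exp (s (i-1)%nat j) - c i j * exp (s i j)) / hdual xf (i - 1)).
    { unfold Rdiv. apply Rmult_le_pos; [lra|]. left. apply Rinv_0_lt_compat. auto. }
    assert (EQ : (c i j * exp (s i j) - c (i-1)%nat j * exp (s (i-1)%nat j)) / hdual xf (i - 1)
      = - ((c (i-1)%nat j * exp (s (i-1)%nat j) - c i j * exp (s i j)) / hdual xf (i - 1)))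
      by (field; lra).
    rewrite EQ. nra.
  - lra.
Qed.

Lemma Fy_right yf Ny c s i j : strictly_increasing_on yf Ny ->
  (forall k, (1 <= k <= Ny)%nat -> c i j * exp (s i j) <= c i k * exp (s i k)) ->
  0 <= Fy yf Ny c s i j.
Proof.
  intros H Hm. unfold Fy, gy.
  destruct ((1 <=? j) && (j <=? Ny - 1))%bool eqn:E.
  - apply andb_prop in E as [E1 E2]. apply Nat.leb_le in E1, E2.
    apply Rmult_le_pos; [left; apply hmean_pos|].
    unfold Rdiv. apply Rmult_le_pos.
    + assert (c i j * exp (s i j) <= c i (S j) * exp (s i (S j))) by (apply Hm; lia). lra.
    + left. apply Rinv_0_lt_compat. apply (hdual_pos yf Ny); auto.
  - lra.
Qed.

Lemma Fy_left yf Ny c s i j : strictly_increasing_on yf Ny ->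
  (forall k, (1 <= k <= Ny)%nat -> c i j * exp (s i j) <= c i k * exp (s i k)) ->
  Fy yf Ny c s i (j - 1)%nat <= 0.
Proof.
  intros H Hm. unfold Fy, gy.
  destruct ((1 <=? j - 1) && (j - 1 <=? Ny - 1))%bool eqn:E.
  - apply andb_prop in E as [E1 E2]. apply Nat.leb_le in E1, E2.
    replace (S (j-1)) with j by lia.
    assert (c i j * exp (s i j) <= c i (j-1)%nat * exp (s i (j-1)%nat)) by (apply Hm; lia).
    pose proof (hmean_pos (s i j) (s i (j-1)%nat)).
    assert (0 < hdual yf (j-1)) by (apply (hdual_pos yf Ny); auto).
    assert (0 <= (c i (j-1)%nat * exp (s i (j-1)%nat) - c i j * exp (s i j)) / hdual yf (j - 1)).
    { unfold Rdiv. apply Rmult_le_pos; [lra|]. left. apply Rinv_0_lt_compat. auto. }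
    assert (EQ : (c i j * exp (s i j) - c i (j-1)%nat * exp (s i (j-1)%nat)) / hdual yf (j - 1)
      = - ((c i (j-1)%nat * exp (s i (j-1)%nat) - c i j * exp (s i j)) / hdual yf (j - 1)))
      by (field; lra).
    rewrite EQ. nra.
  - lra.
Qed.

Lemma min1 (f : nat -> R) N : (1 <= N)%nat ->
  exists k, (1 <= k <= N)%nat /\ forall k', (1 <= k' <= N)%nat -> f k <= f k'.
Proof.
  induction N as [|N IH]; intros h; [lia|].
  destruct (Nat.eq_dec N 0) as [->|hN].
  - exists 1%nat. split; [lia|]. intros k' hk. replace k' with 1%nat by lia. lra.
  - destruct IH as [k [hk Hk]]; [lia|].
    destruct (Rle_dec (f k) (f (S N))).
    + exists k. split; [lia|]. intros k' hk'.
      destruct (Nat.eq_dec k' (S N)) as [->|]; [auto|]. apply Hk; lia.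
    + exists (S N). split; [lia|]. intros k' hk'.
      destruct (Nat.eq_dec k' (S N)) as [->|]; [lra|].
      assert (f k <= f k') by (apply Hk; lia). lra.
Qed.

Lemma min2 (f : nat -> nat -> R) N M : (1 <= N)%nat -> (1 <= M)%nat ->
  exists a b, (1 <= a <= N)%nat /\ (1 <= b <= M)%nat /\
    forall i j, (1 <= i <= N)%nat -> (1 <= j <= M)%nat -> f a b <= f i j.
Proof.
  intros hN hM. induction N as [|N IH]; [lia|].
  destruct (min1 (f (S N)) M hM) as [b1 [hb1 Hb1]].
  destruct (Nat.eq_dec N 0) as [->|h0].
  - exists 1%nat, b1. split; [lia|]. split; [auto|]. intros i j hi hj.
    replace i with 1%nat by lia. auto.
  - destruct IH as [a [b [ha [hb Hab]]]]; [lia|].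
    destruct (Rle_dec (f a b) (f (S N) b1)).
    + exists a, b. split; [lia|]. split; [auto|]. intros i j hi hj.
      destruct (Nat.eq_dec i (S N)) as [->|].
      * assert (f (S N) b1 <= f (S N) j) by auto. lra.
      * apply Hab; lia.
    + exists (S N), b1. split; [lia|]. split; [auto|]. intros i j hi hj.
      destruct (Nat.eq_dec i (S N)) as [->|]; [auto|].
      assert (f a b <= f i j) by (apply Hab; lia). lra.
Qed.

Theorem theorem3 (Nx Ny : nat) (xf yf : nat -> R)
  (hNx : (1 <= Nx)%nat) (hNy : (1 <= Ny)%nat)
  (hxf : strictly_increasing_on xf Nx) (hyf : strictly_increasing_on yf Ny)
  (q dt : R) (hdt : 0 < dt) (psi cn cn1 : nat -> nat -> R) :
  (forall i j, (1 <= i <= Nx)%nat -> (1 <= j <= Ny)%nat -> 0 < cn i j) ->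
  (forall i j, (1 <= i <= Nx)%nat -> (1 <= j <= Ny)%nat ->
     hcell xf i * hcell yf j * ((cn1 i j - cn i j) / dt)
     = Q xf yf Nx Ny cn1 (fun i j => q * psi i j) i j) ->
  forall i j, (1 <= i <= Nx)%nat -> (1 <= j <= Ny)%nat -> 0 < cn1 i j.
Proof.
  intros Hpos Heq.
  set (s := fun i j => q * psi i j) in *.
  destruct (min2 (fun i j => cn1 i j * exp (s i j)) Nx Ny hNx hNy)
    as [a [b [ha [hb Hab]]]].
  simpl in Hab.
  assert (Q0 : 0 <= Q xf yf Nx Ny cn1 s a b).
  { unfold Q.
    pose proof (Fx_right xf Nx cn1 s a b hxf (fun k hk => Hab k b hk hb)).
    pose proof (Fx_left xf Nx cn1 s a b hxf (fun k hk => Hab k b hk hb)).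
    pose proof (Fy_right yf Ny cn1 s a b hyf (fun k hk => Hab a k ha hk)).
    pose proof (Fy_left yf Ny cn1 s a b hyf (fun k hk => Hab a k ha hk)).
    pose proof (hcell_pos xf Nx a hxf ha).
    pose proof (hcell_pos yf Ny b hyf hb).
    apply Rplus_le_le_0_compat; apply Rmult_le_pos; lra. }
  rewrite <- Heq in Q0 by auto.
  pose proof (hcell_pos xf Nx a hxf ha).
  pose proof (hcell_pos yf Ny b hyf hb).
  assert (0 <= (cn1 a b - cn a b) / dt).
  { destruct (Rle_dec 0 ((cn1 a b - cn a b) / dt)) as [|n]; auto.
    assert (0 < hcell xf a * hcell yf b) by (apply Rmult_lt_0_compat; auto).
    exfalso. nra. }
  assert (0 <= cn1 a b - cn a b).
  { replace (cn1 a b - cn a b) with ((cn1 a b - cn a b) / dt * dt) by (field; lra). nra. }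
  pose proof (Hpos a b ha hb).
  intros i j hi hj.
  pose proof (Hab i j hi hj).
  pose proof (exp_pos (s a b)). pose proof (exp_pos (s i j)).
  assert (0 < cn1 a b * exp (s a b)) by (apply Rmult_lt_0_compat; lra).
  destruct (Rle_dec (cn1 i j) 0); [|lra].
  exfalso. assert (cn1 i j * exp (s i j) <= 0) by nra. lra.
Qed.
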